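(* Let $f(z)=z+\sum_{n\ge2}a_nz^n$ belong to $\Omega$, let $k\in\{1,2,3,\dots\}$, and set $b_{k+1}=\frac1k a_2$ and $b_{2k+1}=\frac1k a_3-\frac12\frac{k-1}{k^2}a_2^2$ (these are the coefficients of $z^{k+1}$ and $z^{2k+1}$ in the $k$-th root transform $F_k(z)=(f(z^k))^{1/k}=z+\sum_{n\ge1}b_{kn+1}z^{kn+1}$). Then for every $\mu\in\mathbb{C}$, $$\left|b_{2k+1}-\mu b_{k+1}^2\right|\le \frac{1}{4k}\max\left\{1,\left|\frac{2\mu+k-1}{2k}\right|\right\},$$ and the inequality is sharp.
   Context: $\Delta=\{z\in\mathbb{C}:|z|<1\}$. $\mathcal{A}$ is the class of functions $f$ analytic in $\Delta$ with $f(0)=0$, $f'(0)=1$. $\Omega$ is the class of $f\in\mathcal{A}$ with $|zf'(z)-f(z)|<\tfrac12$ for all $z\in\Delta$. *)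

(* Defs.v *)
From Stdlib Require Import Reals.
Open Scope R_scope.

Record Cx : Type := mkC { Re : R; Im : R }.

Definition RtoC (r : R) : Cx := mkC r 0.
Definition Cadd (z w : Cx) : Cx := mkC (Re z + Re w) (Im z + Im w).
Definition Copp (z : Cx) : Cx := mkC (- Re z) (- Im z).
Definition Csub (z w : Cx) : Cx := Cadd z (Copp w).
Definition Cmul (z w : Cx) : Cx :=
  mkC (Re z * Re w - Im z * Im w) (Re z * Im w + Im z * Re w).
Definition Cinv (z : Cx) : Cx :=
  mkC (Re z / (Re z ^ 2 + Im z ^ 2)) (- Im z / (Re z ^ 2 + Im z ^ 2)).
Definition Cdiv (z w : Cx) : Cx := Cmul z (Cinv w).
Fixpoint Cpow (z : Cx) (n : nat) : Cx :=
  match n with O => RtoC 1 | S m => Cmul z (Cpow z m) end.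
Definition Cmod (z : Cx) : R := sqrt (Re z ^ 2 + Im z ^ 2).

Fixpoint Csum (u : nat -> Cx) (N : nat) : Cx :=
  match N with O => u O | S M => Cadd (Csum u M) (u (S M)) end.

Definition Cseries_to (u : nat -> Cx) (l : Cx) : Prop :=
  Un_cv (fun N => Re (Csum u N)) (Re l) /\ Un_cv (fun N => Im (Csum u N)) (Im l).

Definition C_deriv (f : Cx -> Cx) (z L : Cx) : Prop :=
  forall eps : R, eps > 0 -> exists delta : R, delta > 0 /\
    forall h : Cx, 0 < Cmod h < delta ->
      Cmod (Csub (Cdiv (Csub (f (Cadd z h)) (f z)) h) L) < eps.

Definition analytic_disk_with_coeffs (f : Cx -> Cx) (a : nat -> Cx) : Prop :=
  forall z : Cx, Cmod z < 1 -> Cseries_to (fun n => Cmul (a n) (Cpow z n)) (f z).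

(* Class A: analytic in Delta, f(0) = 0, f'(0) = 1 (a_0 = 0, a_1 = 1). *)
Definition in_A (f : Cx -> Cx) (a : nat -> Cx) : Prop :=
  analytic_disk_with_coeffs f a /\ a 0%nat = RtoC 0 /\ a 1%nat = RtoC 1.

Definition in_Omega (f : Cx -> Cx) (a : nat -> Cx) : Prop :=
  in_A f a /\
  forall z : Cx, Cmod z < 1 ->
    exists L : Cx, C_deriv f z L /\ Cmod (Csub (Cmul z L) (f z)) < 1 / 2.

Definition b_k1 (k : nat) (a : nat -> Cx) : Cx := Cmul (RtoC (1 / INR k)) (a 2%nat).
Definition b_2k1 (k : nat) (a : nat -> Cx) : Cx :=
  Csub (Cmul (RtoC (1 / INR k)) (a 3%nat))
       (Cmul (RtoC (1 / 2 * (INR k - 1) / (INR k ^ 2))) (Cmul (a 2%nat) (a 2%nat))).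

Definition FS (k : nat) (a : nat -> Cx) (mu : Cx) : Cx :=
  Csub (b_2k1 k a) (Cmul mu (Cmul (b_k1 k a) (b_k1 k a))).
Definition FS_bound (k : nat) (mu : Cx) : R :=
  1 / (4 * INR k) *
  Rmax 1 (Cmod (Cmul (RtoC (1 / (2 * INR k)))
                     (Cadd (Cmul (RtoC 2) mu) (RtoC (INR k - 1))))).

(* Main.v *)
From Stdlib Require Import Reals Lra Lia Psatz.
From Coquelicot Require Import Coquelicot.
Require Import Defs.
Open Scope R_scope.

Notation CMod := Complex.Cmod.
Notation CRe := (@fst R R).
Notation CIm := (@snd R R).

Definition toC (z : Cx) : C := (Defs.Re z, Defs.Im z).
Definition fromC (w : C) : Cx := mkC (fst w) (snd w).
Lemma toC_fromC w : toC (fromC w) = w. Proof. destruct w; reflexivity. Qed.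
Lemma fromC_toC z : fromC (toC z) = z. Proof. destruct z; reflexivity. Qed.
Lemma Cmod_toC z : Defs.Cmod z = CMod (toC z). Proof. reflexivity. Qed.
Lemma toC_add z w : toC (Cadd z w) = (toC z + toC w)%C. Proof. reflexivity. Qed.
Lemma toC_sub z w : toC (Csub z w) = (toC z - toC w)%C. Proof. reflexivity. Qed.
Lemma toC_mul z w : toC (Cmul z w) = (toC z * toC w)%C. Proof. reflexivity. Qed.
Lemma toC_div z w : toC (Defs.Cdiv z w) = (toC z / toC w)%C. Proof. reflexivity. Qed.
Lemma toC_R r : toC (Defs.RtoC r) = Complex.RtoC r. Proof. reflexivity. Qed.
Lemma toC_pow z n : toC (Defs.Cpow z n) = Complex.Cpow (toC z) n.
Proof. induction n; simpl. reflexivity. rewrite toC_mul, IHn. reflexivity. Qed.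

Fixpoint rs (f : nat -> R) (n : nat) : R :=
  match n with O => 0 | S m => rs f m + f m end.
Fixpoint cs (f : nat -> C) (n : nat) : C :=
  match n with O => 0%C | S m => (cs f m + f m)%C end.

Lemma toC_Csum u N : toC (Csum u N) = cs (fun n => toC (u n)) (S N).
Proof. induction N; simpl. apply injective_projections; simpl; ring.
  rewrite toC_add, IHN. reflexivity. Qed.

Lemma rs_ext f g n : (forall i, (i < n)%nat -> f i = g i) -> rs f n = rs g n.
Proof. induction n; intros H; simpl; auto. rewrite IHn, H; auto. Qed.
Lemma cs_ext f g n : (forall i, (i < n)%nat -> f i = g i) -> cs f n = cs g n.
Proof. induction n; intros H; simpl; auto. rewrite IHn, H; auto. Qed.
Lemma rs_le f g n : (forall i, (i < n)%nat -> f i <= g i) -> rs f n <= rs g n.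
Proof. induction n; intros H; simpl. lra. pose proof (H n ltac:(lia)). pose proof (IHn ltac:(auto)). lra. Qed.
Lemma rs_plus f g n : rs (fun i => f i + g i) n = rs f n + rs g n.
Proof. induction n; simpl; [ring| rewrite IHn; ring]. Qed.
Lemma rs_scal c f n : rs (fun i => c * f i) n = c * rs f n.
Proof. induction n; simpl; [ring| rewrite IHn; ring]. Qed.
Lemma rs_scalr_aux c f n : rs (fun i => f i * c) n = rs f n * c.
Proof. induction n; simpl; [ring| rewrite IHn; ring]. Qed.
Lemma rs_const c n : rs (fun _ => c) n = INR n * c.
Proof. induction n; simpl rs; [simpl; ring| rewrite IHn, S_INR; ring]. Qed.
Lemma cs_plus f g n : cs (fun i => f i + g i)%C n = (cs f n + cs g n)%C.
Proof. induction n; simpl; [ring| rewrite IHn; ring]. Qed.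
Lemma cs_minus f g n : cs (fun i => f i - g i)%C n = (cs f n - cs g n)%C.
Proof. induction n; simpl; [ring| rewrite IHn; ring]. Qed.
Lemma cs_scal c f n : cs (fun i => c * f i)%C n = (c * cs f n)%C.
Proof. induction n; simpl; [ring| rewrite IHn; ring]. Qed.
Lemma cs_scalr c f n : cs (fun i => f i * c)%C n = (cs f n * c)%C.
Proof. induction n; simpl; [ring| rewrite IHn; ring]. Qed.
Lemma cs_fst f n : fst (cs f n) = rs (fun i => fst (f i)) n.
Proof. induction n; simpl; auto. rewrite <- IHn. reflexivity. Qed.
Lemma cs_snd f n : snd (cs f n) = rs (fun i => snd (f i)) n.
Proof. induction n; simpl; auto. rewrite <- IHn. reflexivity. Qed.
Lemma cs_swap (f : nat -> nat -> C) n m :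
  cs (fun i => cs (fun j => f i j) m) n = cs (fun j => cs (fun i => f i j) n) m.
Proof. induction n; simpl.
  - induction m; simpl; auto. rewrite <- IHm. ring.
  - rewrite IHn. rewrite <- cs_plus. reflexivity. Qed.
Lemma cs_triangle f n : CMod (cs f n) <= rs (fun i => CMod (f i)) n.
Proof. induction n; simpl. rewrite Cmod_0; lra.
  eapply Rle_trans. apply Cmod_triangle. lra. Qed.
Lemma cs_shift f K m : cs f (K + m) = (cs f K + cs (fun i => f (K + i)%nat) m)%C.
Proof. induction m; simpl. rewrite Nat.add_0_r; ring. rewrite Nat.add_succ_r. simpl. rewrite IHm. ring. Qed.
Lemma cs_delta (f : nat -> C) n m : (m < n)%nat -> (forall i, (i < n)%nat -> i <> m -> f i = 0%C) -> cs f n = f m.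
Proof. induction n; intros Hm H. lia. simpl.
  destruct (Nat.eq_dec m n) as [->|Hne].
  - rewrite (cs_ext _ (fun _ => 0%C)). assert (cs (fun _ => 0%C) n = 0%C) as ->.
    { clear. induction n; simpl; auto. rewrite IHn. ring. } ring.
    intros; apply H; lia.
  - rewrite IHn; try lia. rewrite (H n); try lia. ring. intros; apply H; lia. Qed.
Lemma rs_nonneg f n : (forall i, (i<n)%nat -> 0 <= f i) -> 0 <= rs f n.
Proof. intros; replace 0 with (rs (fun _ => 0) n). apply rs_le; auto. rewrite rs_const; ring. Qed.
Lemma lim_le u l K B : Un_cv u l -> (forall n, (K <= n)%nat -> u n <= B) -> l <= B.
Proof. intros Hc Hb. destruct (Rle_or_lt l B) as [|Hlt]; auto.
  destruct (Hc (l - B) ltac:(lra)) as [N HN].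
  specialize (HN (max N K) ltac:(lia)). specialize (Hb (max N K) ltac:(lia)).
  unfold R_dist in HN. apply Rabs_def2 in HN. lra. Qed.

Lemma cv_const c : Un_cv (fun _ => c) c.
Proof. intros e He. exists O. intros. unfold R_dist. rewrite Rminus_diag, Rabs_R0. auto. Qed.

Lemma cv_cmod (S : nat -> C) l c K B :
  Un_cv (fun n => fst (S n)) (fst l) -> Un_cv (fun n => snd (S n)) (snd l) ->
  (forall n, (K <= n)%nat -> CMod (S n - c)%C <= B) -> CMod (l - c)%C <= B.
Proof. intros H1 H2 Hb.
  assert (HB : 0 <= B). { eapply Rle_trans. apply Cmod_ge_0. apply (Hb K). lia. }
  assert (Hc : Un_cv (fun n => (fst (S n) - fst c) * (fst (S n) - fst c) + (snd (S n) - snd c) * (snd (S n) - snd c))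
      ((fst l - fst c) * (fst l - fst c) + (snd l - snd c) * (snd l - snd c))).
  { apply CV_plus; apply CV_mult; apply CV_minus; auto; apply cv_const. }
  assert (Hl := lim_le _ _ K (B*B) Hc).
  assert (HH : (fst l - fst c) * (fst l - fst c) + (snd l - snd c) * (snd l - snd c) <= B * B).
  { apply Hl. intros n Hn. specialize (Hb n Hn). pose proof (Cmod2_alt (S n - c)%C) as E.
    pose proof (Cmod_ge_0 (S n - c)%C).
    simpl in E. unfold Complex.Re, Complex.Im in E. simpl in E. nra. }
  pose proof (Cmod2_alt (l - c)%C) as E. pose proof (Cmod_ge_0 (l - c)%C).
  simpl in E. unfold Complex.Re, Complex.Im in E. simpl in E. nra. Qed.

Lemma fin_bound (u : nat -> R) N : exists M, forall n, (n < N)%nat -> Rabs (u n) <= M.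
Proof. induction N. exists 0. intros; lia. destruct IHN as [M HM].
  exists (Rmax M (Rabs (u N))). intros n Hn. destruct (Nat.eq_dec n N) as [->|].
  apply Rmax_r. eapply Rle_trans. apply HM. lia. apply Rmax_l. Qed.

Lemma cv_bounded u l : Un_cv u l -> exists M, forall n, Rabs (u n) <= M.
Proof. intros H. destruct (H 1 ltac:(lra)) as [N HN]. destruct (fin_bound u N) as [M HM].
  exists (Rmax M (Rabs l + 1)). intros n. destruct (Compare_dec.le_lt_dec N n).
  - specialize (HN n l0). unfold R_dist in HN. eapply Rle_trans; [|apply Rmax_r].
    pose proof (Rabs_triang_inv (u n) l). lra.
  - eapply Rle_trans; [|apply Rmax_l]. auto. Qed.

Lemma Cmod_le_abs z : CMod z <= Rabs (fst z) + Rabs (snd z).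
Proof. unfold Complex.Cmod. rewrite <- (sqrt_pow2 (Rabs (fst z) + Rabs (snd z))).
  apply sqrt_le_1_alt. rewrite <- (pow2_abs (fst z)) at 1. rewrite <- (pow2_abs (snd z)) at 1.
  pose proof (Rabs_pos (fst z)); pose proof (Rabs_pos (snd z)). nra.
  pose proof (Rabs_pos (fst z)); pose proof (Rabs_pos (snd z)). lra. Qed.

Lemma nxn x n : 0 <= x < 1 -> INR n * x ^ n <= 1 / (1 - x).
Proof. intros Hx.
  assert (H : forall n, INR n * x ^ n <= rs (fun i => x ^ i) n).
  { induction n0. simpl; lra. simpl rs. rewrite S_INR. simpl pow.
    assert (x * x ^ n0 <= x ^ n0) by (pose proof (pow_le x n0 ltac:(lra)); nra).
    assert (0 <= x ^ n0) by (apply pow_le; lra). pose proof (pos_INR n0). nra. }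
  assert (G : forall n, rs (fun i => x ^ i) n * (1 - x) = 1 - x ^ n).
  { induction n0; simpl. ring. rewrite Rmult_plus_distr_r, IHn0. ring. }
  eapply Rle_trans. apply H. specialize (G n). assert (0 <= x ^ n) by (apply pow_le; lra).
  apply (Rmult_le_reg_r (1 - x)). lra. rewrite G. unfold Rdiv. rewrite Rmult_assoc, Rinv_l; lra. Qed.

Lemma geom s K m : 0 <= s < 1 -> rs (fun i => s ^ (K + i)) m <= s ^ K / (1 - s).
Proof. intros Hs.
  assert (G : rs (fun i => s ^ (K + i)) m * (1 - s) = s ^ K - s ^ (K + m)).
  { induction m; simpl. rewrite Nat.add_0_r. ring. rewrite Rmult_plus_distr_r, IHm.
    rewrite Nat.add_succ_r. simpl. ring. }
  assert (0 <= s ^ (K + m)) by (apply pow_le; lra).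
  apply (Rmult_le_reg_r (1 - s)). lra. rewrite G. unfold Rdiv. rewrite Rmult_assoc, Rinv_l; lra. Qed.
Definition SerHyp (g : C -> C) (b : nat -> C) := forall w, CMod w < 1 ->
  Un_cv (fun N => fst (cs (fun n => b n * w ^ n)%C (S N))) (fst (g w)) /\
  Un_cv (fun N => snd (cs (fun n => b n * w ^ n)%C (S N))) (snd (g w)).

Definition Dc (g : C -> C) (w L : C) := forall eps, eps > 0 -> exists delta, delta > 0 /\
  forall h, 0 < CMod h < delta -> CMod ((g (w + h) - g w) / h - L)%C < eps.

Lemma Cmod_RtoC_pos r : 0 <= r -> CMod (Complex.RtoC r) = r.
Proof. intros; rewrite Cmod_R, Rabs_pos_eq; auto. Qed.

Lemma coef_bound g b rho : SerHyp g b -> 0 <= rho < 1 ->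
  exists B, forall n, CMod (b n) * rho ^ n <= B.
Proof. intros Hs Hr. set (w := Complex.RtoC rho).
  assert (Hw : CMod w < 1) by (unfold w; rewrite Cmod_RtoC_pos; lra).
  destruct (Hs w Hw) as [H1 H2].
  destruct (cv_bounded _ _ H1) as [M1 HM1]. destruct (cv_bounded _ _ H2) as [M2 HM2].
  set (U := cs (fun n => b n * w ^ n)%C).
  assert (P1 : 0 <= M1) by (eapply Rle_trans; [apply Rabs_pos| apply (HM1 O)]).
  assert (P2 : 0 <= M2) by (eapply Rle_trans; [apply Rabs_pos| apply (HM2 O)]).
  assert (B1 : forall n, Rabs (fst (U n)) <= M1).
  { intros [|n]. simpl. rewrite Rabs_R0. auto. apply HM1. }
  assert (B2 : forall n, Rabs (snd (U n)) <= M2).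
  { intros [|n]. simpl. rewrite Rabs_R0. auto. apply HM2. }
  exists (2 * M1 + 2 * M2). intros n.
  assert (E : (b n * w ^ n)%C = (U (S n) - U n)%C) by (unfold U; simpl cs; ring).
  assert (E2 : CMod (b n * w ^ n)%C = CMod (b n) * rho ^ n).
  { rewrite Cmod_mult, Cmod_pow. unfold w. rewrite Cmod_RtoC_pos; lra. }
  rewrite <- E2, E. eapply Rle_trans. apply Cmod_le_abs.
  assert (F1 : fst (U (S n) - U n)%C = fst (U (S n)) + - fst (U n)) by (simpl; ring).
  assert (F2 : snd (U (S n) - U n)%C = snd (U (S n)) + - snd (U n)) by (simpl; ring).
  rewrite F1, F2. pose proof (B1 (S n)); pose proof (B1 n); pose proof (B2 (S n)); pose proof (B2 n).
  pose proof (Rabs_triang (fst (U (S n))) (- fst (U n))).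
  pose proof (Rabs_triang (snd (U (S n))) (- snd (U n))).
  rewrite !Rabs_Ropp in *. lra. Qed.

Lemma coef_bound2 g b rho1 : SerHyp g b -> 0 < rho1 < 1 ->
  exists C0, forall n, INR n * CMod (b n) * rho1 ^ n <= C0.
Proof. intros Hs Hr. destruct (coef_bound g b ((1 + rho1) / 2) Hs ltac:(lra)) as [B HB].
  set (rho := (1 + rho1)/2). set (x := rho1 / rho).
  assert (Hx : 0 <= x < 1). { unfold x, rho. split. apply Rle_mult_inv_pos; lra.
    apply (Rmult_lt_reg_r ((1+rho1)/2)). lra. unfold Rdiv at 1. rewrite Rmult_assoc, Rinv_l; lra. }
  assert (HB0 : 0 <= B) by (eapply Rle_trans; [|apply (HB O)]; simpl; rewrite Rmult_1_r; apply Cmod_ge_0).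
  exists (1 / (1 - x) * B). intros n.
  assert (E : rho1 ^ n = x ^ n * rho ^ n). { rewrite <- Rpow_mult_distr. unfold x. f_equal. field. unfold rho; lra. }
  rewrite E. pose proof (nxn x n Hx). specialize (HB n).
  assert (0 <= INR n * x ^ n) by (apply Rmult_le_pos; [apply pos_INR| apply pow_le; lra]).
  assert (0 <= CMod (b n) * rho ^ n) by (apply Rmult_le_pos; [apply Cmod_ge_0| apply pow_le; unfold rho; lra]).
  replace (INR n * CMod (b n) * (x ^ n * rho ^ n)) with ((INR n * x ^ n) * (CMod (b n) * rho ^ n)) by ring.
  apply Rmult_le_compat; auto. Qed.
Lemma Cmod_RtoC_INR n : CMod (Complex.RtoC (INR n)) = INR n.
Proof. apply Cmod_RtoC_pos, pos_INR. Qed.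

Lemma Cmod_pow_le w r n : 0 <= r -> CMod w <= r -> CMod (w ^ n)%C <= r ^ n.
Proof. intros; rewrite Cmod_pow. apply pow_incr. split; auto. apply Cmod_ge_0. Qed.

Lemma powdiff1 w h rho n : 0 <= rho -> CMod w <= rho -> CMod (w + h)%C <= rho ->
  rho * CMod ((w + h) ^ n - w ^ n)%C <= INR n * rho ^ n * CMod h.
Proof. intros Hr Hw Hwh. induction n.
  - assert (E : ((w + h) ^ 0 - w ^ 0)%C = 0%C) by (simpl; ring). rewrite E, Cmod_0. simpl; lra.
  - replace ((w + h) ^ S n - w ^ S n)%C with ((w + h) * ((w + h) ^ n - w ^ n) + w ^ n * h)%C by (simpl; ring).
    eapply Rle_trans. apply Rmult_le_compat_l. auto. apply Cmod_triangle.
    rewrite !Cmod_mult. rewrite S_INR. simpl pow.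
    pose proof (Cmod_pow_le w rho n Hr Hw). pose proof (Cmod_ge_0 h).
    pose proof (Cmod_ge_0 ((w + h) ^ n - w ^ n)%C). pose proof (Cmod_ge_0 (w+h)%C).
    pose proof (pos_INR n). pose proof (pow_le rho n Hr).
    assert (rho * (CMod (w + h)%C * CMod ((w + h) ^ n - w ^ n)%C) <= rho * (INR n * rho ^ n * CMod h)).
    { replace (rho * (CMod (w + h)%C * CMod ((w + h) ^ n - w ^ n)%C)) with (CMod (w + h)%C * (rho * CMod ((w + h) ^ n - w ^ n)%C)) by ring.
      apply Rmult_le_compat; auto; nra. }
    assert (CMod (w ^ n)%C * CMod h <= rho ^ n * CMod h) by nra.
    nra. Qed.

Lemma powdiff2 w h n : CMod w <= 1 -> CMod (w + h)%C <= 1 ->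
  CMod ((w + h) ^ n - w ^ n - Complex.RtoC (INR n) * w ^ (Nat.pred n) * h)%C <= INR n ^ 2 * CMod h ^ 2.
Proof. intros Hw Hwh. induction n.
  - assert (E : ((w + h) ^ 0 - w ^ 0 - Complex.RtoC (INR 0) * w ^ Nat.pred 0 * h)%C = 0%C) by (simpl; ring). rewrite E, Cmod_0. simpl; lra.
  - destruct n.
    + assert (E : ((w + h) ^ 1 - w ^ 1 - Complex.RtoC (INR 1) * w ^ Nat.pred 1 * h)%C = 0%C) by (simpl; ring). rewrite E, Cmod_0. simpl.
      pose proof (Cmod_ge_0 h). nra.
    + replace ((w + h) ^ S (S n) - w ^ S (S n) - Complex.RtoC (INR (S (S n))) * w ^ Nat.pred (S (S n)) * h)%C
        with ((w + h) * ((w + h) ^ S n - w ^ S n - Complex.RtoC (INR (S n)) * w ^ Nat.pred (S n) * h)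
              + Complex.RtoC (INR (S n)) * w ^ n * h * h)%C.
      2:{ rewrite (S_INR (S n)). rewrite RtoC_plus. simpl Nat.pred. simpl Complex.Cpow.
          set (A := ((w+h)^n)%C). set (Z := (w^n)%C). set (m := Complex.RtoC (INR (S n))). ring. }
      eapply Rle_trans. apply Cmod_triangle. rewrite !Cmod_mult, Cmod_RtoC_INR.
      pose proof (Cmod_pow_le w 1 n ltac:(lra) Hw). rewrite pow1 in H.
      set (E := CMod ((w + h) ^ S n - w ^ S n - Complex.RtoC (INR (S n)) * w ^ Nat.pred (S n) * h)%C) in *.
      assert (0 <= E) by apply Cmod_ge_0. pose proof (Cmod_ge_0 h). pose proof (Cmod_ge_0 (w+h)%C).
      pose proof (Cmod_ge_0 (w ^ n)%C). pose proof (pos_INR (S n)).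
      rewrite (S_INR (S n)). 
      assert (CMod (w + h)%C * E <= INR (S n) ^ 2 * CMod h ^ 2) by nra.
      assert (INR (S n) * CMod (w ^ n)%C * CMod h * CMod h <= INR (S n) * CMod h ^ 2).
      { replace (INR (S n) * CMod (w ^ n)%C * CMod h * CMod h) with ((INR (S n) * CMod h ^ 2) * CMod (w ^ n)%C) by ring.
        rewrite <- (Rmult_1_r (INR (S n) * CMod h ^ 2)) at 2. apply Rmult_le_compat_l; auto.
        apply Rmult_le_pos; auto. apply pow_le; auto. }
      nra. Qed.
Definition Fp (b : nat -> C) K w := cs (fun n => b n * w ^ n)%C (S K).
Definition Dp (b : nat -> C) K w := cs (fun n => Complex.RtoC (INR n) * b n * w ^ (Nat.pred n))%C (S K).
Definition Pp (b : nat -> C) K w := cs (fun n => Complex.RtoC (INR n - 1) * b n * w ^ n)%C (S K).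

Lemma P_identity b K w : Pp b K w = (w * Dp b K w - Fp b K w)%C.
Proof. unfold Pp, Dp, Fp. rewrite <- cs_scal, <- cs_minus. apply cs_ext. intros [|m] _.
  - simpl. rewrite RtoC_minus. simpl. ring.
  - simpl Nat.pred. simpl Complex.Cpow. rewrite RtoC_minus. set (Z := (w ^ m)%C). ring. Qed.

Lemma Un_cv_ext u v l : (forall n, u n = v n) -> Un_cv u l -> Un_cv v l.
Proof. intros E H e He. destruct (H e He) as [N HN]. exists N. intros n Hn. rewrite <- E. auto. Qed.

Lemma tail_terms (b : nat -> C) rho1 rhop C0 K :
  0 < rhop < rho1 -> (forall n, INR n * CMod (b n) * rho1 ^ n <= C0) ->
  forall i, INR (S K + i) * CMod (b (S K + i)%nat) * rhop ^ (S K + i) <= C0 * (rhop / rho1) ^ (S K + i).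
Proof. intros Hr HC i. set (n := (S K + i)%nat).
  assert (E : rhop ^ n = rho1 ^ n * (rhop / rho1) ^ n).
  { rewrite <- Rpow_mult_distr. f_equal. field. lra. }
  rewrite E. replace (INR n * CMod (b n) * (rho1 ^ n * (rhop / rho1) ^ n)) with
    ((INR n * CMod (b n) * rho1 ^ n) * (rhop / rho1) ^ n) by ring.
  apply Rmult_le_compat_r. apply pow_le. apply Rle_mult_inv_pos; lra. apply HC. Qed.

Lemma fst_minus (x y : C) : fst (x - y)%C = fst x - fst y.
Proof. destruct x, y; simpl; ring. Qed.
Lemma snd_minus (x y : C) : snd (x - y)%C = snd x - snd y.
Proof. destruct x, y; simpl; ring. Qed.

Lemma C0_nonneg (b : nat -> C) rho1 C0 : (forall n, INR n * CMod (b n) * rho1 ^ n <= C0) -> 0 <= C0.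
Proof. intros HC. specialize (HC O). simpl in HC. lra. Qed.

Lemma tailA g b rho1 rhop C0 K w : SerHyp g b -> 0 < rhop < rho1 -> rho1 < 1 ->
  (forall n, INR n * CMod (b n) * rho1 ^ n <= C0) -> CMod w <= rhop ->
  CMod (g w - Fp b K w)%C <= C0 * ((rhop / rho1) ^ (S K) / (1 - rhop / rho1)).
Proof. intros Hs Hr Hr1 HC Hw.
  assert (Hsig : 0 <= rhop / rho1 < 1).
  { split. apply Rle_mult_inv_pos; lra. apply (Rmult_lt_reg_r rho1). lra.
    unfold Rdiv; rewrite Rmult_assoc, Rinv_l; lra. }
  pose proof (C0_nonneg _ _ _ HC) as HC0.
  destruct (Hs w ltac:(lra)) as [H1 H2].
  apply cv_cmod with (S := fun N => cs (fun n => b n * w ^ n)%C (S N)) (K := K); auto.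
  intros N HN. unfold Fp. replace (S N) with (S K + (N - K))%nat by lia. rewrite cs_shift.
  match goal with |- context [(?A + ?X - ?A)%C] => replace (A + X - A)%C with X by ring end.
  eapply Rle_trans. apply cs_triangle.
  eapply Rle_trans. apply rs_le with (g := fun i => C0 * (rhop / rho1) ^ (S K + i)).
  - intros i _. eapply Rle_trans; [|apply (tail_terms b rho1 rhop C0 K ltac:(lra) HC i)].
    rewrite Cmod_mult. pose proof (Cmod_pow_le w rhop (S K + i) ltac:(lra) Hw).
    pose proof (Cmod_ge_0 (b (S K + i)%nat)).
    assert (1 <= INR (S K + i)) by (apply (le_INR 1); lia).
    pose proof (pow_le rhop (S K + i) ltac:(lra)).
    assert (CMod (b (S K + i)%nat) * CMod (w ^ (S K + i))%C <= CMod (b (S K + i)%nat) * rhop ^ (S K + i))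
      by (apply Rmult_le_compat_l; auto).
    assert (0 <= CMod (b (S K + i)%nat) * rhop ^ (S K + i)) by (apply Rmult_le_pos; auto).
    nra.
  - rewrite rs_scal. apply Rmult_le_compat_l; auto. apply geom; auto. Qed.

Lemma tailB g b rho1 rhop C0 K w h : SerHyp g b -> 0 < rhop < rho1 -> rho1 < 1 ->
  (forall n, INR n * CMod (b n) * rho1 ^ n <= C0) -> CMod w <= rhop -> CMod (w + h)%C <= rhop ->
  CMod (g (w + h) - g w - (Fp b K (w + h) - Fp b K w))%C
    <= C0 / rhop * ((rhop / rho1) ^ (S K) / (1 - rhop / rho1)) * CMod h.
Proof. intros Hs Hr Hr1 HC Hw Hwh.
  assert (Hsig : 0 <= rhop / rho1 < 1).
  { split. apply Rle_mult_inv_pos; lra. apply (Rmult_lt_reg_r rho1). lra.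
    unfold Rdiv; rewrite Rmult_assoc, Rinv_l; lra. }
  pose proof (C0_nonneg _ _ _ HC) as HC0.
  destruct (Hs w ltac:(lra)) as [H1 H2]. destruct (Hs (w + h)%C ltac:(lra)) as [H3 H4].
  apply cv_cmod with (S := fun N => cs (fun n => b n * ((w + h) ^ n - w ^ n))%C (S N)) (K := K).
  - eapply Un_cv_ext; [| apply (CV_minus _ _ _ _ H3 H1)]. intros n. cbv beta.
    rewrite <- fst_minus, <- cs_minus. f_equal. apply cs_ext. intros; ring.
  - eapply Un_cv_ext; [| apply (CV_minus _ _ _ _ H4 H2)]. intros n. cbv beta.
    rewrite <- snd_minus, <- cs_minus. f_equal. apply cs_ext. intros; ring.
  - intros N HN. unfold Fp. rewrite <- cs_minus.
    rewrite (cs_ext (fun i => b i * (w + h) ^ i - b i * w ^ i)%C (fun n => b n * ((w + h) ^ n - w ^ n))%C)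
      by (intros; ring).
    replace (S N) with (S K + (N - K))%nat by lia. rewrite cs_shift.
    match goal with |- context [(?A + ?X - ?A)%C] => replace (A + X - A)%C with X by ring end.
    eapply Rle_trans. apply cs_triangle.
    eapply Rle_trans. apply rs_le with (g := fun i => C0 / rhop * (rhop / rho1) ^ (S K + i) * CMod h).
    + intros i _. set (n := (S K + i)%nat).
      pose proof (tail_terms b rho1 rhop C0 K ltac:(lra) HC i) as T. fold n in T.
      pose proof (powdiff1 w h rhop n ltac:(lra) Hw Hwh) as P.
      rewrite Cmod_mult.
      pose proof (Cmod_ge_0 (b n)). pose proof (Cmod_ge_0 h).
      pose proof (Cmod_ge_0 ((w + h) ^ n - w ^ n)%C).
      apply (Rmult_le_reg_l rhop). lra.
      replace (rhop * (C0 / rhop * (rhop / rho1) ^ n * CMod h)) with (C0 * (rhop / rho1) ^ n * CMod h) by (field; lra).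
      replace (rhop * (CMod (b n) * CMod ((w + h) ^ n - w ^ n)%C)) with (CMod (b n) * (rhop * CMod ((w + h) ^ n - w ^ n)%C)) by ring.
      eapply Rle_trans. apply Rmult_le_compat_l. auto. apply P.
      replace (CMod (b n) * (INR n * rhop ^ n * CMod h)) with ((INR n * CMod (b n) * rhop ^ n) * CMod h) by ring.
      apply Rmult_le_compat_r; auto.
    + rewrite rs_scalr_aux. apply Rmult_le_compat_r. apply Cmod_ge_0. rewrite rs_scal.
      apply Rmult_le_compat_l. apply Rle_mult_inv_pos; lra. apply geom; auto. Qed.
Lemma polyC b K w h : CMod w <= 1 -> CMod (w + h)%C <= 1 ->
  CMod (Fp b K (w + h) - Fp b K w - Dp b K w * h)%C
    <= rs (fun n => CMod (b n) * INR n ^ 2) (S K) * CMod h ^ 2.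
Proof. intros Hw Hwh. unfold Fp, Dp. rewrite <- cs_scalr, <- !cs_minus.
  rewrite (cs_ext _ (fun n => b n * ((w + h) ^ n - w ^ n - Complex.RtoC (INR n) * w ^ Nat.pred n * h))%C)
    by (intros; ring).
  eapply Rle_trans. apply cs_triangle. rewrite <- rs_scalr_aux. apply rs_le. intros i _.
  rewrite Cmod_mult. rewrite Rmult_assoc. apply Rmult_le_compat_l. apply Cmod_ge_0.
  apply powdiff2; auto. Qed.

Lemma Cmod_div_RtoC (X : C) t : 0 < t -> CMod (X / Complex.RtoC t)%C = CMod X / t.
Proof. intros Ht. rewrite Cmod_div. rewrite Cmod_RtoC_pos; lra.
  intros E. apply (f_equal fst) in E. simpl in E. lra. Qed.

Lemma derivD g b rho1 rhop C0 K w r L : SerHyp g b -> 0 < rhop < rho1 -> rho1 < 1 ->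
  (forall n, INR n * CMod (b n) * rho1 ^ n <= C0) -> CMod w <= r -> r < rhop ->
  Dc g w L -> CMod (L - Dp b K w)%C <= C0 / rhop * ((rhop / rho1) ^ (S K) / (1 - rhop / rho1)).
Proof. intros Hs Hr Hr1 HC Hw Hrr HD.
  set (T := C0 / rhop * ((rhop / rho1) ^ (S K) / (1 - rhop / rho1))).
  set (D := Dp b K w).
  destruct (Rle_or_lt (CMod (L - D)%C) T) as [|Hlt]; auto. exfalso.
  set (eta := CMod (L - D)%C - T).
  destruct (HD (eta / 2) ltac:(unfold eta; lra)) as [delta [Hd Hdelta]].
  set (CK := rs (fun n => CMod (b n) * INR n ^ 2) (S K)).
  assert (HCK : 0 <= CK). { apply rs_nonneg. intros. apply Rmult_le_pos. apply Cmod_ge_0. apply pow2_ge_0. }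
  set (t := Rmin (delta / 2) (Rmin (rhop - r) (eta / (4 * (CK + 1))))).
  assert (Ht0 : 0 < t). { unfold t. apply Rmin_pos. lra. apply Rmin_pos. lra.
    apply Rdiv_lt_0_compat. unfold eta; lra. lra. }
  assert (Ht1 : t <= delta / 2) by apply Rmin_l.
  assert (Ht2 : t <= rhop - r) by (eapply Rle_trans; [apply Rmin_r| apply Rmin_l]).
  assert (Ht3 : t <= eta / (4 * (CK + 1))) by (eapply Rle_trans; [apply Rmin_r| apply Rmin_r]).
  set (h := Complex.RtoC t).
  assert (Hh : CMod h = t) by (unfold h; apply Cmod_RtoC_pos; lra).
  assert (Hwh : CMod (w + h)%C <= rhop).
  { eapply Rle_trans. apply Cmod_triangle. lra. }
  specialize (Hdelta h ltac:(lra)).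
  set (X := (g (w + h) - g w)%C) in *.
  assert (B1 : CMod (X - D * h)%C <= T * t + CK * t ^ 2).
  { replace (X - D * h)%C with ((g (w + h) - g w - (Fp b K (w + h) - Fp b K w)) + (Fp b K (w + h) - Fp b K w - Dp b K w * h))%C
      by (unfold X, D; ring).
    eapply Rle_trans. apply Cmod_triangle. rewrite <- Hh. apply Rplus_le_compat.
    apply (tailB g b rho1 rhop C0 K w h); auto; lra.
    unfold CK. apply polyC; lra. }
  assert (B2 : CMod (X / h - D)%C <= T + CK * t).
  { replace (X / h - D)%C with ((X - D * h) / h)%C.
    2:{ field. intros E. apply (f_equal fst) in E. unfold h in E; simpl in E. lra. }
    replace (CMod ((X - D * h) / h)%C) with (CMod (X - D * h)%C / t) by (unfold h; rewrite Cmod_div_RtoC; auto).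
    apply (Rmult_le_reg_r t); auto.
    unfold Rdiv. rewrite Rmult_assoc, Rinv_l by lra. nra. }
  assert (B3 : CK * t <= eta / 4).
  { apply Rle_trans with (CK * (eta / (4 * (CK + 1)))). apply Rmult_le_compat_l; auto.
    assert (0 < eta) by (unfold eta; lra).
    replace (CK * (eta / (4 * (CK + 1)))) with ((eta / 4) * (CK / (CK + 1))) by (field; lra).
    assert (CK / (CK + 1) <= 1). { apply (Rmult_le_reg_r (CK + 1)). lra. unfold Rdiv. rewrite Rmult_assoc, Rinv_l; lra. }
    assert (0 <= CK / (CK + 1)) by (apply Rle_mult_inv_pos; lra). nra. }
  assert (Htri : CMod (L - D)%C <= CMod (X / h - D)%C + CMod (X / h - L)%C).
  { replace (L - D)%C with ((X / h - D) + - (X / h - L))%C by ring.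
    eapply Rle_trans. apply Cmod_triangle. rewrite Cmod_opp. lra. }
  unfold eta in *. lra. Qed.
Lemma approx g b : SerHyp g b -> forall r, 0 < r < 1 -> forall eps, eps > 0 ->
  exists K, (3 <= K)%nat /\ forall w L, CMod w = r -> Dc g w L ->
    CMod (w * L - g w - Pp b K w)%C <= eps.
Proof. intros Hs r Hr eps Heps.
  set (rho1 := (1 + r) / 2). set (rhop := (r + rho1) / 2).
  assert (Hr1 : 0 < rho1 < 1) by (unfold rho1; lra).
  assert (Hrp : 0 < rhop < rho1) by (unfold rhop, rho1; lra).
  destruct (coef_bound2 g b rho1 Hs Hr1) as [C0 HC].
  pose proof (C0_nonneg _ _ _ HC) as HC0.
  set (s := rhop / rho1).
  assert (Hsig : 0 <= s < 1).
  { unfold s. split. apply Rle_mult_inv_pos; lra. apply (Rmult_lt_reg_r rho1). lra.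
    unfold Rdiv; rewrite Rmult_assoc, Rinv_l; lra. }
  set (M := C0 / rhop / (1 - s)).
  assert (HM : 0 <= M) by (unfold M; apply Rle_mult_inv_pos; [apply Rle_mult_inv_pos|]; lra).
  destruct (pow_lt_1_zero s ltac:(rewrite Rabs_pos_eq; lra) (eps / (2 * M + 1)) ltac:(apply Rdiv_lt_0_compat; lra)) as [N HN].
  exists (max N 3). split. lia. intros w L Hw HD.
  set (K := max N 3).
  specialize (HN (S K) ltac:(unfold K; lia)). rewrite Rabs_pos_eq in HN by (apply pow_le; lra).
  assert (HT : C0 / rhop * (s ^ S K / (1 - s)) = M * s ^ S K) by (unfold M; field; lra).
  pose proof (derivD g b rho1 rhop C0 K w r L Hs Hrp (proj2 Hr1) HC ltac:(lra) ltac:(unfold rhop, rho1; lra) HD) as D1.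
  pose proof (tailA g b rho1 rhop C0 K w Hs Hrp (proj2 Hr1) HC ltac:(unfold rhop, rho1; lra)) as D2.
  fold s in D1, D2. rewrite HT in D1.
  assert (D2' : CMod (g w - Fp b K w)%C <= M * s ^ S K).
  { eapply Rle_trans. apply D2. rewrite <- HT.
    apply Rmult_le_compat_r. apply Rle_mult_inv_pos. apply pow_le; lra. lra.
    assert (C0 / rhop - C0 = C0 * (1 - rhop) / rhop) by (field; lra).
    assert (0 <= C0 * (1 - rhop) / rhop) by (apply Rle_mult_inv_pos; [apply Rmult_le_pos|]; lra). lra. }
  rewrite P_identity.
  replace (w * L - g w - (w * Dp b K w - Fp b K w))%C with (w * (L - Dp b K w) + - (g w - Fp b K w))%C by ring.
  eapply Rle_trans. apply Cmod_triangle. rewrite Cmod_opp, Cmod_mult, Hw.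
  pose proof (Cmod_ge_0 (L - Dp b K w)%C). pose proof (pow_le s (S K) ltac:(lra)).
  assert (M * s ^ S K <= M * (eps / (2 * M + 1))) by (apply Rmult_le_compat_l; lra).
  assert (M * (eps / (2 * M + 1)) * 2 <= eps).
  { replace (M * (eps / (2 * M + 1)) * 2) with (eps * (2 * M / (2 * M + 1))) by (field; lra).
    assert (2 * M / (2 * M + 1) <= 1). { apply (Rmult_le_reg_r (2 * M + 1)). lra. unfold Rdiv. rewrite Rmult_assoc, Rinv_l; lra. }
    nra. }
  nra. Qed.
Definition Ex (phi : R) : C := (cos phi, sin phi).

Lemma Ex_mul a b : (Ex a * Ex b)%C = Ex (a + b).
Proof. unfold Ex. apply injective_projections; simpl; rewrite ?cos_plus, ?sin_plus; ring. Qed.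
Lemma Cmod_Ex a : CMod (Ex a) = 1.
Proof. assert (E : cos a ^ 2 + sin a ^ 2 = 1) by (pose proof (sin2_cos2 a); unfold Rsqr in H; nra).
  unfold Complex.Cmod, Ex. simpl fst; simpl snd. rewrite E. apply sqrt_1. Qed.
Lemma Ex_0 : Ex 0 = 1%C.
Proof. unfold Ex. rewrite cos_0, sin_0. reflexivity. Qed.
Lemma deMoivre r th n : ((Complex.RtoC r * Ex th) ^ n)%C = (Complex.RtoC (r ^ n) * Ex (INR n * th))%C.
Proof. induction n.
  - simpl. rewrite Rmult_0_l, Ex_0. apply injective_projections; simpl; ring.
  - simpl Complex.Cpow. rewrite IHn. rewrite S_INR.
    replace (Complex.RtoC r * Ex th * (Complex.RtoC (r ^ n) * Ex (INR n * th)))%C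
      with (Complex.RtoC (r * r ^ n) * (Ex th * Ex (INR n * th)))%C
      by (rewrite RtoC_mult; ring).
    rewrite Ex_mul. simpl pow. f_equal. f_equal. ring. Qed.

Lemma rs_tele f n : rs (fun j => f (S j) - f j) n = f n - f O.
Proof. induction n; simpl. ring. rewrite IHn. ring. Qed.
Lemma rs_opp f n : rs (fun j => - f j) n = - rs f n.
Proof. induction n; simpl. ring. rewrite IHn. ring. Qed.

Lemma trig_sums N d : (0 < d < N)%nat ->
  let x := 2 * PI * INR d / INR N in
  rs (fun j => cos (INR j * x)) N = 0 /\ rs (fun j => sin (INR j * x)) N = 0.
Proof. intros Hd x.
  assert (HN : 0 < INR N) by (apply lt_0_INR; lia).
  assert (Hs : 0 < sin (x / 2)).
  { apply sin_gt_0; unfold x.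
    - pose proof PI_RGT_0. assert (0 < INR d) by (apply lt_0_INR; lia).
      apply Rdiv_lt_0_compat; [|lra]. apply Rdiv_lt_0_compat; [|lra]. nra.
    - replace (2 * PI * INR d / INR N / 2) with (PI * (INR d / INR N)) by (field; lra).
      assert (INR d / INR N < 1). { apply (Rmult_lt_reg_r (INR N)); auto. unfold Rdiv.
        rewrite Rmult_assoc, Rinv_l by lra. rewrite Rmult_1_r, Rmult_1_l. apply lt_INR; lia. }
      pose proof PI_RGT_0. nra. }
  assert (HNx : INR N * x = 2 * INR d * PI) by (unfold x; field; lra).
  clearbody x.
  split.
  - assert (E : forall j, 2 * sin (x / 2) * cos (INR j * x) =
                  sin (INR (S j) * x - x / 2) - sin (INR j * x - x / 2)).
    { intros j. rewrite S_INR. replace ((INR j + 1) * x - x / 2) with (INR j * x + x / 2) by field.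
      rewrite sin_plus, sin_minus. ring. }
    assert (T : 2 * sin (x / 2) * rs (fun j => cos (INR j * x)) N = 0).
    { rewrite <- rs_scal. rewrite (rs_ext _ (fun j => sin (INR (S j) * x - x / 2) - sin (INR j * x - x / 2))).
      2:{ intros; apply E. }
      rewrite (rs_tele (fun j => sin (INR j * x - x / 2))). simpl INR.
      replace (INR N * x - x / 2) with (- (x / 2) + 2 * INR d * PI) by lra.
      rewrite sin_period. replace (0 * x - x / 2) with (- (x / 2)) by ring. ring. }
    apply Rmult_integral in T. destruct T; lra.
  - assert (E : forall j, 2 * sin (x / 2) * sin (INR j * x) =
                  - (cos (INR (S j) * x - x / 2) - cos (INR j * x - x / 2))).
    { intros j. rewrite S_INR. replace ((INR j + 1) * x - x / 2) with (INR j * x + x / 2) by field.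
      rewrite cos_plus, cos_minus. ring. }
    assert (T : 2 * sin (x / 2) * rs (fun j => sin (INR j * x)) N = 0).
    { rewrite <- rs_scal. rewrite (rs_ext _ (fun j => - (cos (INR (S j) * x - x / 2) - cos (INR j * x - x / 2)))).
      2:{ intros; apply E. }
      rewrite rs_opp, (rs_tele (fun j => cos (INR j * x - x / 2))). simpl INR.
      replace (INR N * x - x / 2) with (- (x / 2) + 2 * INR d * PI) by lra.
      rewrite cos_period. replace (0 * x - x / 2) with (- (x / 2)) by ring. ring. }
    apply Rmult_integral in T. destruct T; lra. Qed.

Definition th (N j : nat) := 2 * PI * INR j / INR N.

Lemma cs_const (c : C) n : cs (fun _ => c) n = (Complex.RtoC (INR n) * c)%C.
Proof. induction n. simpl. ring. simpl cs. rewrite IHn, S_INR, RtoC_plus. ring. Qed.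

Lemma orthE N n m : (n < N)%nat -> (m < N)%nat ->
  cs (fun j => Ex ((INR n - INR m) * th N j)) N = if Nat.eq_dec n m then Complex.RtoC (INR N) else 0%C.
Proof. intros Hn Hm. assert (HN : 0 < INR N) by (apply lt_0_INR; lia).
  destruct (Nat.eq_dec n m) as [->|Hne].
  - rewrite (cs_ext _ (fun _ => 1%C)). rewrite cs_const. ring.
    intros. rewrite Rminus_diag, Rmult_0_l. apply Ex_0.
  - destruct (Compare_dec.lt_dec m n) as [Hlt|Hlt].
    + destruct (trig_sums N (n - m) ltac:(lia)) as [H1 H2].
      apply injective_projections; rewrite ?cs_fst, ?cs_snd; simpl.
      * rewrite <- H1. apply rs_ext. intros. f_equal. unfold th. rewrite minus_INR by lia. field; lra.
      * rewrite <- H2. apply rs_ext. intros. f_equal. unfold th. rewrite minus_INR by lia. field; lra.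
    + destruct (trig_sums N (m - n) ltac:(lia)) as [H1 H2].
      apply injective_projections; rewrite ?cs_fst, ?cs_snd; simpl.
      * rewrite <- H1. apply rs_ext. intros. simpl. rewrite <- cos_neg. f_equal. unfold th. rewrite minus_INR by lia. field; lra.
      * replace 0 with (- 0) by ring. rewrite <- H2, <- rs_opp. apply rs_ext. intros. simpl. rewrite <- sin_neg. f_equal. unfold th. rewrite minus_INR by lia. field; lra. Qed.
Definition PP (N : nat) (u : nat -> C) K j := cs (fun n => u n * Ex (INR n * th N j))%C (S K).

Lemma fourier N K u m : (K < N)%nat -> (m <= K)%nat ->
  cs (fun j => PP N u K j * Ex (- (INR m * th N j)))%C N = (Complex.RtoC (INR N) * u m)%C.
Proof. intros HK Hm. unfold PP.
  rewrite (cs_ext _ (fun j => cs (fun n => u n * Ex ((INR n - INR m) * th N j)) (S K))%C).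
  2:{ intros j _. rewrite <- cs_scalr. apply cs_ext. intros n _. rewrite <- Cmult_assoc, Ex_mul.
      f_equal. f_equal. ring. }
  rewrite cs_swap.
  rewrite (cs_ext _ (fun n => u n * (if Nat.eq_dec n m then Complex.RtoC (INR N) else 0))%C).
  2:{ intros n Hn. rewrite cs_scal. rewrite orthE by lia. reflexivity. }
  rewrite (cs_delta _ (S K) m) by (lia || (intros i _ Hi; destruct (Nat.eq_dec i m); [lia| ring])).
  destruct (Nat.eq_dec m m); [ring| lia]. Qed.

Definition n2 (z : C) := fst z ^ 2 + snd z ^ 2.
Definition ip (x y : C) := fst x * fst y + snd x * snd y.
Lemma n2_Cmod z : CMod z ^ 2 = n2 z.
Proof. rewrite Cmod2_alt. reflexivity. Qed.
Lemma n2_nonneg z : 0 <= n2 z.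
Proof. unfold n2. nra. Qed.
Lemma n2_mul x y : n2 (x * y)%C = n2 x * n2 y.
Proof. destruct x, y; unfold n2; simpl; ring. Qed.
Lemma n2_Ex a : n2 (Ex a) = 1.
Proof. rewrite <- n2_Cmod, Cmod_Ex. ring. Qed.
Lemma rs_ip x c n : rs (fun j => ip (x j) c) n = ip (cs x n) c.
Proof. unfold ip. rewrite cs_fst, cs_snd, rs_plus, !rs_scalr_aux. reflexivity. Qed.
Lemma ip_Q x u b : ip x (u * Ex b)%C = ip (x * Ex (- b))%C u.
Proof. destruct x, u; unfold ip, Ex; simpl. rewrite cos_neg, sin_neg. ring. Qed.
Lemma ip_0 c : ip 0%C c = 0.
Proof. unfold ip; simpl; ring. Qed.
Lemma n2_expand X A B : n2 (X - A - B)%C = n2 X + n2 A + n2 B - 2 * ip X A - 2 * ip X B + 2 * ip A B.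
Proof. destruct X, A, B; unfold n2, ip; simpl; ring. Qed.
Lemma n2_one_plus Y : n2 (1 + Y)%C = 1 + n2 Y + 2 * ip Y 1%C.
Proof. destruct Y; unfold n2, ip; simpl; ring. Qed.
Lemma ip_scal (c : C) x y : ip (c * x)%C y = ip x (Cconj c * y)%C.
Proof. destruct c, x, y; unfold ip; simpl; ring. Qed.
Lemma rs_minus f g n : rs (fun i => f i - g i) n = rs f n - rs g n.
Proof. induction n; simpl; [ring| rewrite IHn; ring]. Qed.

Lemma sumEx_pos N : (1 < N)%nat -> cs (fun j => Ex (th N j)) N = 0%C.
Proof. intros HN. pose proof (orthE N 1 0 HN ltac:(lia)) as E. simpl in E.
  rewrite <- E. apply cs_ext. intros. f_equal. ring. Qed.
Lemma sumEx_neg N : (1 < N)%nat -> cs (fun j => Ex (- th N j)) N = 0%C.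
Proof. intros HN. pose proof (orthE N 0 1 ltac:(lia) HN) as E. simpl in E.
  rewrite <- E. apply cs_ext. intros. f_equal. ring. Qed.

Lemma ip_RN (n : R) u : ip (Complex.RtoC n * u)%C u = n * n2 u.
Proof. destruct u; unfold ip, n2; simpl; ring. Qed.
Lemma n2_RtoC r : n2 (Complex.RtoC r) = r ^ 2.
Proof. unfold n2; simpl; ring. Qed.

Lemma discrete N K (u : nat -> C) (beta : C) r bnd : (K < N)%nat -> (3 <= K)%nat -> 0 <= r -> u 1%nat = Complex.RtoC 0 ->
  (forall j, (j < N)%nat -> CMod (PP N u K j) <= bnd) ->
  n2 (u 2%nat) + n2 (u 3%nat + beta * Complex.RtoC r * u 2%nat)%C <= bnd ^ 2 * (1 + n2 beta * r ^ 2).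
Proof. intros HK H3 Hr Hu1 Hb.
  assert (HN : 0 < INR N) by (apply lt_0_INR; lia).
  assert (Hbnd : 0 <= bnd) by (eapply Rle_trans; [apply Cmod_ge_0| apply (Hb O); lia]).
  set (P := PP N u K). set (v3 := (u 3%nat + beta * Complex.RtoC r * u 2%nat)%C).
  set (Y := fun j => (beta * Complex.RtoC r * Ex (th N j))%C).
  set (Q := fun j => ((1 + Y j) * P j)%C).
  set (A := fun j => (u 2%nat * Ex (INR 2 * th N j))%C).
  set (B := fun j => (v3 * Ex (INR 3 * th N j))%C).
  assert (F2 : cs (fun j => Q j * Ex (- (INR 2 * th N j)))%C N = (Complex.RtoC (INR N) * u 2%nat)%C).
  { rewrite (cs_ext _ (fun j => P j * Ex (- (INR 2 * th N j)) + (beta * Complex.RtoC r) * (P j * Ex (- (INR 1 * th N j))))%C).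
    2:{ intros j _. unfold Q, Y.
        replace (Ex (- (INR 1 * th N j))) with (Ex (th N j) * Ex (- (INR 2 * th N j)))%C.
        ring. rewrite Ex_mul. f_equal. simpl. ring. }
    rewrite cs_plus, cs_scal. unfold P. rewrite !fourier by lia. rewrite Hu1. ring. }
  assert (F3 : cs (fun j => Q j * Ex (- (INR 3 * th N j)))%C N = (Complex.RtoC (INR N) * v3)%C).
  { rewrite (cs_ext _ (fun j => P j * Ex (- (INR 3 * th N j)) + (beta * Complex.RtoC r) * (P j * Ex (- (INR 2 * th N j))))%C).
    2:{ intros j _. unfold Q, Y.
        replace (Ex (- (INR 2 * th N j))) with (Ex (th N j) * Ex (- (INR 3 * th N j)))%C.
        ring. rewrite Ex_mul. f_equal. simpl. ring. }
    rewrite cs_plus, cs_scal. unfold P. rewrite !fourier by lia. unfold v3. ring. }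
  assert (SQA : rs (fun j => ip (Q j) (A j)) N = INR N * n2 (u 2%nat)).
  { unfold A. rewrite (rs_ext _ (fun j => ip (Q j * Ex (- (INR 2 * th N j)))%C (u 2%nat))) by (intros; apply ip_Q).
    rewrite rs_ip, F2. apply ip_RN. }
  assert (SQB : rs (fun j => ip (Q j) (B j)) N = INR N * n2 v3).
  { unfold B. rewrite (rs_ext _ (fun j => ip (Q j * Ex (- (INR 3 * th N j)))%C v3)) by (intros; apply ip_Q).
    rewrite rs_ip, F3. apply ip_RN. }
  assert (SA : rs (fun j => n2 (A j)) N = INR N * n2 (u 2%nat)).
  { rewrite (rs_ext _ (fun _ => n2 (u 2%nat))). apply rs_const. intros. unfold A. rewrite n2_mul, n2_Ex. ring. }
  assert (SB : rs (fun j => n2 (B j)) N = INR N * n2 v3).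
  { rewrite (rs_ext _ (fun _ => n2 v3)). apply rs_const. intros. unfold B. rewrite n2_mul, n2_Ex. ring. }
  assert (SAB : rs (fun j => ip (A j) (B j)) N = 0).
  { rewrite (rs_ext _ (fun j => ip (u 2%nat * Ex (- th N j))%C v3)).
    2:{ intros. unfold A, B. rewrite ip_Q. f_equal. rewrite <- Cmult_assoc, Ex_mul. f_equal. f_equal. simpl. ring. }
    rewrite rs_ip, cs_scal, sumEx_neg by lia. replace (u 2%nat * 0)%C with (Complex.RtoC 0) by ring. apply ip_0. }
  assert (LOW : INR N * (n2 (u 2%nat) + n2 v3) <= rs (fun j => n2 (Q j)) N).
  { eapply Rle_trans; [| apply rs_le with (f := fun j => 2 * ip (Q j) (A j) + 2 * ip (Q j) (B j) - n2 (A j) - n2 (B j) - 2 * ip (A j) (B j))].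
    - rewrite !rs_minus, !rs_plus, !rs_scal, SQA, SQB, SA, SB, SAB. lra.
    - intros j _. pose proof (n2_expand (Q j) (A j) (B j)). pose proof (n2_nonneg (Q j - A j - B j)%C). lra. }
  assert (SY : rs (fun j => n2 (1 + Y j)%C) N = INR N * (1 + n2 beta * r ^ 2)).
  { rewrite (rs_ext _ (fun j => (1 + n2 beta * r ^ 2) + 2 * ip (Y j) 1%C)).
    2:{ intros. rewrite n2_one_plus. unfold Y. rewrite !n2_mul, n2_RtoC, n2_Ex. ring. }
    rewrite rs_plus, rs_scal, rs_const, rs_ip. unfold Y. rewrite cs_scal, sumEx_pos by lia.
    replace (beta * Complex.RtoC r * 0)%C with (Complex.RtoC 0) by ring. rewrite ip_0. ring. }
  assert (UP : rs (fun j => n2 (Q j)) N <= bnd ^ 2 * (INR N * (1 + n2 beta * r ^ 2))).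
  { rewrite <- SY, <- rs_scal. apply rs_le. intros j Hj. unfold Q. rewrite n2_mul.
    rewrite <- (n2_Cmod (P j)). assert (CMod (P j) <= bnd) by (apply Hb; auto). pose proof (Cmod_ge_0 (P j)).
    pose proof (n2_nonneg (1 + Y j)%C).
    assert (CMod (P j) ^ 2 <= bnd ^ 2) by (apply pow_incr; split; lra). nra. }
  apply (Rmult_le_reg_l (INR N)); auto. fold v3. nra. Qed.
Lemma bernoulli e n : 0 <= e <= 1 -> 1 - INR n * e <= (1 - e) ^ n.
Proof. intros He. induction n. simpl; lra. rewrite S_INR. simpl pow.
  assert ((1 - e) * (1 - INR n * e) <= (1 - e) * (1 - e) ^ n) by (apply Rmult_le_compat_l; lra).
  pose proof (pos_INR n). nra. Qed.

Lemma limit_arg X Y : 0 <= X -> 0 <= Y ->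
  (forall r eps, 0 < r < 1 -> eps > 0 -> r ^ 6 * X <= (1/2 + eps) ^ 2 * Y) -> X <= Y / 4.
Proof. intros HX HY H. destruct (Rle_or_lt X (Y / 4)) as [|Hlt]; auto. exfalso.
  set (d := X - Y / 4).
  set (e := Rmin (1/2) (d / (2 * (6 * X + 3 * Y + 1)))).
  assert (He0 : 0 < e). { unfold e. apply Rmin_pos. lra. apply Rdiv_lt_0_compat; unfold d; lra. }
  assert (He1 : e <= 1/2) by apply Rmin_l.
  assert (He2 : e <= d / (2 * (6 * X + 3 * Y + 1))) by apply Rmin_r.
  assert (He3 : e * (6 * X + 3 * Y + 1) <= d / 2).
  { apply Rle_trans with (d / (2 * (6 * X + 3 * Y + 1)) * (6 * X + 3 * Y + 1)).
    apply Rmult_le_compat_r; lra. right. field. lra. }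
  specialize (H (1 - e) e ltac:(lra) He0).
  pose proof (bernoulli e 6 ltac:(lra)). simpl INR in H0.
  replace (1 + 1 + 1 + 1 + 1 + 1) with 6 in H0 by ring.
  assert ((1 - 6 * e) * X <= (1 - e) ^ 6 * X) by (apply Rmult_le_compat_r; lra).
  assert ((1/2 + e) ^ 2 * Y <= (1/4 + 2 * e) * Y) by (apply Rmult_le_compat_r; nra).
  unfold d in *. nra. Qed.

Lemma coef_ineq g b : SerHyp g b ->
  (forall w, CMod w < 1 -> exists L, Dc g w L /\ CMod (w * L - g w)%C < 1 / 2) ->
  forall beta, n2 (b 2%nat) + n2 (Complex.RtoC 2 * b 3%nat + beta * b 2%nat)%C <= (1 + n2 beta) / 4.
Proof. intros Hs Hom beta. apply limit_arg.
  - pose proof (n2_nonneg (b 2%nat)); pose proof (n2_nonneg (Complex.RtoC 2 * b 3%nat + beta * b 2%nat)%C); lra.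
  - pose proof (n2_nonneg beta); lra.
  - intros r eps Hr He.
    destruct (approx g b Hs r Hr eps He) as [K [HK Happ]].
    set (N := (K + 4)%nat).
    set (u := fun n => (Complex.RtoC (INR n - 1) * b n * Complex.RtoC (r ^ n))%C).
    assert (Hb : forall j, (j < N)%nat -> CMod (PP N u K j) <= 1/2 + eps).
    { intros j Hj. set (z := (Complex.RtoC r * Ex (th N j))%C).
      assert (Hz : CMod z = r) by (unfold z; rewrite Cmod_mult, Cmod_Ex, Cmod_RtoC_pos; lra).
      assert (E : PP N u K j = Pp b K z).
      { unfold PP, Pp. apply cs_ext. intros n _. unfold z. rewrite deMoivre. unfold u. ring. }
      rewrite E. destruct (Hom z ltac:(lra)) as [L [HD HL]].
      specialize (Happ z L Hz HD).
      replace (Pp b K z) with ((z * L - g z) + - (z * L - g z - Pp b K z))%C by ring.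
      eapply Rle_trans. apply Cmod_triangle. rewrite Cmod_opp. lra. }
    pose proof (discrete N K u beta r (1/2 + eps) ltac:(unfold N; lia) HK ltac:(lra)
       ltac:(unfold u; simpl; apply injective_projections; simpl; ring) Hb) as D.
    assert (E2 : u 2%nat = (Complex.RtoC (r ^ 2) * b 2%nat)%C).
    { unfold u. simpl INR. apply injective_projections; simpl; ring. }
    assert (E3 : (u 3%nat + beta * Complex.RtoC r * u 2%nat)%C = (Complex.RtoC (r ^ 3) * (Complex.RtoC 2 * b 3%nat + beta * b 2%nat))%C).
    { unfold u. simpl INR. apply injective_projections; simpl; ring. }
    rewrite E3, E2, !n2_mul, !n2_RtoC in D.
    pose proof (n2_nonneg (b 2%nat)); pose proof (n2_nonneg (Complex.RtoC 2 * b 3%nat + beta * b 2%nat)%C).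
    pose proof (n2_nonneg beta).
    assert (r ^ 2 <= 1) by nra.
    assert (0 <= (r ^ 2) ^ 2) by (apply pow_le; nra).
    assert (r ^ 6 <= (r ^ 2) ^ 2). { replace (r ^ 6) with ((r ^ 2) ^ 2 * r ^ 2) by ring. nra. }
    assert ((r ^ 3) ^ 2 = r ^ 6) by ring.
    assert (0 <= r ^ 6) by (apply pow_le; lra).
    assert ((1/2 + eps) ^ 2 * (1 + n2 beta * r ^ 2) <= (1/2 + eps) ^ 2 * (1 + n2 beta)).
    { apply Rmult_le_compat_l. nra. nra. }
    nra. Qed.
Definition tval (k : nat) (m : C) : C :=
  (Complex.RtoC (1 / (2 * INR k)) * (Complex.RtoC 2 * m + Complex.RtoC (INR k - 1)))%C.

Lemma FS_toC k a mu : toC (FS k a mu) =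
  ((Complex.RtoC (1 / INR k) * toC (a 3%nat) - Complex.RtoC (1 / 2 * (INR k - 1) / (INR k ^ 2)) * (toC (a 2%nat) * toC (a 2%nat)))
   - toC mu * ((Complex.RtoC (1 / INR k) * toC (a 2%nat)) * (Complex.RtoC (1 / INR k) * toC (a 2%nat))))%C.
Proof. reflexivity. Qed.

Lemma FSb_toC k mu : FS_bound k mu = 1 / (4 * INR k) * Rmax 1 (CMod (tval k (toC mu))).
Proof. reflexivity. Qed.

Lemma FS_alg k (b2 b3 m : C) : (1 <= k)%nat ->
  ((Complex.RtoC (1 / INR k) * b3 - Complex.RtoC (1 / 2 * (INR k - 1) / (INR k ^ 2)) * (b2 * b2))
   - m * ((Complex.RtoC (1 / INR k) * b2) * (Complex.RtoC (1 / INR k) * b2)))%C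
  = (Complex.RtoC (1 / INR k) * (b3 - tval k m * (b2 * b2)))%C.
Proof. intros Hk. assert (INR k <> 0) by (apply not_0_INR; lia).
  destruct b2, b3, m. unfold tval. apply injective_projections; simpl; field; auto. Qed.

Lemma translate_ser f a : in_A f a ->
  SerHyp (fun w => toC (f (fromC w))) (fun n => toC (a n)).
Proof. intros [Ha _] w Hw.
  assert (Hz : Defs.Cmod (fromC w) < 1) by (rewrite Cmod_toC, toC_fromC; auto).
  destruct (Ha (fromC w) Hz) as [H1 H2].
  assert (E : forall N, toC (Csum (fun n => Cmul (a n) (Defs.Cpow (fromC w) n)) N) = cs (fun n => toC (a n) * w ^ n)%C (S N)).
  { intros N. rewrite toC_Csum. apply cs_ext. intros. rewrite toC_mul, toC_pow, toC_fromC. reflexivity. }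
  split.
  - eapply Un_cv_ext; [| apply H1]. intros N. cbv beta. rewrite <- E. reflexivity.
  - eapply Un_cv_ext; [| apply H2]. intros N. cbv beta. rewrite <- E. reflexivity. Qed.

Lemma translate_omega f a : in_Omega f a ->
  forall w, CMod w < 1 -> exists L, Dc (fun w => toC (f (fromC w))) w L /\
     CMod (w * L - toC (f (fromC w)))%C < 1 / 2.
Proof. intros [_ Ho] w Hw.
  assert (Hz : Defs.Cmod (fromC w) < 1) by (rewrite Cmod_toC, toC_fromC; auto).
  destruct (Ho (fromC w) Hz) as [L [HD HL]]. exists (toC L). split.
  - intros eps He. destruct (HD eps He) as [d [Hd Hdd]]. exists d. split; auto.
    intros h Hh. specialize (Hdd (fromC h)). rewrite Cmod_toC, toC_fromC in Hdd.
    specialize (Hdd Hh). rewrite Cmod_toC in Hdd.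
    rewrite toC_sub, toC_div, toC_sub, toC_fromC in Hdd.
    replace (Cadd (fromC w) (fromC h)) with (fromC (w + h)%C) in Hdd by reflexivity. exact Hdd.
  - rewrite Cmod_toC, toC_sub, toC_mul, toC_fromC in HL. exact HL. Qed.

Lemma b3_bound (b2 b3 : C) :
  (forall beta, n2 b2 + n2 (Complex.RtoC 2 * b3 + beta * b2)%C <= (1 + n2 beta) / 4) ->
  n2 b2 <= 1/4 /\ CMod b3 <= 1/4 - n2 b2.
Proof. intros H. set (s := n2 b2). set (A := n2 b3).
  assert (Hs : 0 <= s) by apply n2_nonneg. assert (HA : 0 <= A) by apply n2_nonneg.
  assert (H0 : s + 4 * A <= 1/4).
  { specialize (H 0%C). unfold s, A. replace (n2 (Complex.RtoC 2 * b3 + 0 * b2)%C) with (4 * n2 b3) in H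
      by (destruct b2, b3; unfold n2; simpl; ring).
    replace (n2 0%C) with 0 in H by (unfold n2; simpl; ring). lra. }
  split. lra.
  assert (HC : CMod b3 ^ 2 = A) by apply n2_Cmod. pose proof (Cmod_ge_0 b3).
  destruct (Req_dec s (1/4)) as [Eq|Ne].
  - assert (A = 0) by lra. assert (CMod b3 = 0) by nra. lra.
  - set (D := 1 - 4 * s). assert (HD : 0 < D) by (unfold D; lra).
    set (lam := 4 / D).
    specialize (H (Complex.RtoC lam * (Complex.RtoC 2 * b3 * Cconj b2))%C).
    assert (E1 : n2 (Complex.RtoC 2 * b3 + Complex.RtoC lam * (Complex.RtoC 2 * b3 * Cconj b2) * b2)%C
                 = 4 * A * (1 + lam * s) ^ 2).
    { unfold A, s. destruct b2, b3; unfold n2; simpl; ring. }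
    assert (E2 : n2 (Complex.RtoC lam * (Complex.RtoC 2 * b3 * Cconj b2))%C = 4 * lam ^ 2 * A * s).
    { unfold A, s. destruct b2, b3; unfold n2; simpl; ring. }
    rewrite E1, E2 in H. fold s in H.
    assert (Hl : lam * D = 4) by (unfold lam; field; lra).
    assert (Hmu : (1 + lam * s) * D = 1) by (unfold D in *; nra).
    assert (H' : (s + 4 * A * (1 + lam * s) ^ 2) * D ^ 2 <= (1 + 4 * lam ^ 2 * A * s) / 4 * D ^ 2)
      by (apply Rmult_le_compat_r; nra).
    assert (E3 : (s + 4 * A * (1 + lam * s) ^ 2) * D ^ 2 = s * D ^ 2 + 4 * A)
      by (replace ((s + 4 * A * (1 + lam * s) ^ 2) * D ^ 2) with (s * D ^ 2 + 4 * A * ((1 + lam * s) * D) ^ 2) by ring;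
          rewrite Hmu; ring).
    assert (E4 : (s + 4 * A * (1 + lam * s) ^ 2) * D ^ 2 = s * D ^ 2 + 4 * A) by exact E3.
    assert (E5 : (1 + 4 * lam ^ 2 * A * s) / 4 * D ^ 2 = D ^ 2 / 4 + A * s * (lam * D) ^ 2) by (field; lra).
    rewrite E4, E5, Hl in H'.
    assert (A * D <= D ^ 3 / 16) by (unfold D in *; nra).
    assert (A <= (D / 4) ^ 2).
    { apply (Rmult_le_reg_r D); auto. replace ((D / 4) ^ 2 * D) with (D ^ 3 / 16) by field. lra. }
    assert (CMod b3 <= D / 4) by nra. unfold D in *. lra. Qed.

Lemma upper k (hk : (1 <= k)%nat) mu f a : in_Omega f a -> Defs.Cmod (FS k a mu) <= FS_bound k mu.
Proof. intros HO.
  pose proof (coef_ineq _ _ (translate_ser f a (proj1 HO)) (translate_omega f a HO)) as HI.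
  destruct (b3_bound _ _ HI) as [Hs Hb3].
  assert (Hk : 0 < INR k) by (apply lt_0_INR; lia).
  rewrite Cmod_toC, FS_toC, FS_alg by auto. rewrite FSb_toC.
  set (b2 := toC (a 2%nat)). set (b3 := toC (a 3%nat)). set (t := tval k (toC mu)). fold b2 b3 in Hs, Hb3.
  rewrite Cmod_mult, Cmod_RtoC_pos by (apply Rlt_le, Rdiv_lt_0_compat; lra).
  assert (Htr : CMod (b3 - t * (b2 * b2))%C <= CMod b3 + CMod t * n2 b2).
  { replace (b3 - t * (b2 * b2))%C with (b3 + - (t * (b2 * b2)))%C by ring.
    eapply Rle_trans. apply Cmod_triangle. rewrite Cmod_opp, !Cmod_mult, <- n2_Cmod. right; ring. }
  pose proof (Rmax_l 1 (CMod t)). pose proof (Rmax_r 1 (CMod t)). pose proof (n2_nonneg b2).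
  pose proof (Cmod_ge_0 t).
  set (M := Rmax 1 (CMod t)) in *.
  assert (CMod b3 + CMod t * n2 b2 <= M / 4) by nra.
  replace (1 / (4 * INR k) * M) with (1 / INR k * (M / 4)) by (field; lra).
  apply Rmult_le_compat_l. apply Rlt_le, Rdiv_lt_0_compat; lra. lra. Qed.
Lemma omega_of_C (F : C -> C) (c : nat -> C) :
  (forall w, CMod w < 1 -> exists N0, forall N, (N0 <= N)%nat -> cs (fun n => c n * w ^ n)%C (S N) = F w) ->
  c 0%nat = Complex.RtoC 0 -> c 1%nat = Complex.RtoC 1 ->
  (forall w, CMod w < 1 -> exists L, Dc F w L /\ CMod (w * L - F w)%C < 1 / 2) ->
  in_Omega (fun z => fromC (F (toC z))) (fun n => fromC (c n)).
Proof. intros Hser H0 H1 Hom. split; [split; [|split]|].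
  - intros z Hz. rewrite Cmod_toC in Hz. destruct (Hser (toC z) Hz) as [N0 HN0].
    assert (E : forall N, (N0 <= N)%nat -> toC (Csum (fun n => Cmul (fromC (c n)) (Defs.Cpow z n)) N) = F (toC z)).
    { intros N HN. rewrite toC_Csum, <- (HN0 N HN). apply cs_ext. intros.
      rewrite toC_mul, toC_pow, toC_fromC. reflexivity. }
    split; intros eps He; exists N0; intros N HN; unfold R_dist.
    + change (Defs.Re (Csum (fun n => Cmul (fromC (c n)) (Defs.Cpow z n)) N)) with
        (fst (toC (Csum (fun n => Cmul (fromC (c n)) (Defs.Cpow z n)) N))).
      rewrite E by lia. change (Defs.Re (fromC (F (toC z)))) with (fst (F (toC z))).
      rewrite Rminus_diag, Rabs_R0. lra.
    + change (Defs.Im (Csum (fun n => Cmul (fromC (c n)) (Defs.Cpow z n)) N)) with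
        (snd (toC (Csum (fun n => Cmul (fromC (c n)) (Defs.Cpow z n)) N))).
      rewrite E by lia. change (Defs.Im (fromC (F (toC z)))) with (snd (F (toC z))).
      rewrite Rminus_diag, Rabs_R0. lra.
  - rewrite H0. reflexivity.
  - rewrite H1. reflexivity.
  - intros z Hz. rewrite Cmod_toC in Hz. destruct (Hom (toC z) Hz) as [L [HD HL]].
    exists (fromC L). split.
    + intros eps He. destruct (HD eps He) as [d [Hd Hdd]]. exists d. split; auto.
      intros h Hh. rewrite Cmod_toC in Hh. specialize (Hdd (toC h) Hh).
      rewrite Cmod_toC, toC_sub, toC_div, toC_sub, !toC_fromC, toC_add. exact Hdd.
    + rewrite Cmod_toC, toC_sub, toC_mul, !toC_fromC. exact HL. Qed.

Lemma cs_trunc (c : nat -> C) w : (forall n, (4 <= n)%nat -> c n = Complex.RtoC 0) ->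
  forall N, (3 <= N)%nat -> cs (fun n => c n * w ^ n)%C (S N) = cs (fun n => c n * w ^ n)%C 4.
Proof. intros Hc N HN. replace (S N) with (4 + (N - 3))%nat by lia. rewrite cs_shift.
  rewrite (cs_ext (fun i => c (4 + i)%nat * w ^ (4 + i))%C (fun _ => Complex.RtoC 0)). rewrite cs_const. ring.
  intros i _. rewrite Hc by lia. ring. Qed.

Definition c1 (n : nat) : C := match n with 1 => Complex.RtoC 1 | 3 => Complex.RtoC (1/4) | _ => Complex.RtoC 0 end.
Definition F1 (w : C) : C := (w + Complex.RtoC (1/4) * w ^ 3)%C.
Definition c2 (n : nat) : C := match n with 1 => Complex.RtoC 1 | 2 => Complex.RtoC (1/2) | _ => Complex.RtoC 0 end.
Definition F2 (w : C) : C := (w + Complex.RtoC (1/2) * w ^ 2)%C.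

Lemma Cneq0 (h : C) : 0 < CMod h -> h <> Complex.RtoC 0.
Proof. intros H E. rewrite E, Cmod_0 in H. lra. Qed.

Lemma omega1 : in_Omega (fun z => fromC (F1 (toC z))) (fun n => fromC (c1 n)).
Proof. apply omega_of_C; auto.
  - intros w _. exists 3%nat. intros N HN. rewrite cs_trunc; auto.
    + unfold F1. simpl. ring.
    + intros n Hn. destruct n as [|[|[|[|n]]]]; try lia; reflexivity.
  - intros w Hw. exists (1 + Complex.RtoC (3/4) * w ^ 2)%C. split.
    + intros eps He. exists (Rmin 1 eps). split. apply Rmin_pos; lra.
      intros h [Hh0 Hh]. pose proof (Rmin_l 1 eps). pose proof (Rmin_r 1 eps).
      replace ((F1 (w + h) - F1 w) / h - (1 + Complex.RtoC (3 / 4) * w ^ 2))%C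
        with (Complex.RtoC (1/4) * h * (Complex.RtoC 3 * w + h))%C.
      2:{ unfold F1. rewrite !RtoC_div by lra. field. apply Cneq0; auto. }
      rewrite !Cmod_mult, Cmod_RtoC_pos by lra.
      pose proof (Cmod_triangle (Complex.RtoC 3 * w) h). rewrite Cmod_mult, Cmod_RtoC_pos in H1 by lra.
      pose proof (Cmod_ge_0 (Complex.RtoC 3 * w + h)%C). pose proof (Cmod_ge_0 w).
      assert (CMod (Complex.RtoC 3 * w + h)%C <= 4) by lra.
      assert (CMod h * CMod (Complex.RtoC 3 * w + h)%C <= CMod h * 4) by (apply Rmult_le_compat_l; lra).
      lra.
    + replace (w * (1 + Complex.RtoC (3 / 4) * w ^ 2) - F1 w)%C with (Complex.RtoC (1/2) * w ^ 3)%C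
        by (unfold F1; apply injective_projections; simpl; field).
      rewrite Cmod_mult, Cmod_RtoC_pos, Cmod_pow by lra. pose proof (Cmod_ge_0 w).
      assert (CMod w ^ 3 < 1). { simpl. assert (CMod w * CMod w < 1) by nra. nra. }
      lra. Qed.

Lemma omega2 : in_Omega (fun z => fromC (F2 (toC z))) (fun n => fromC (c2 n)).
Proof. apply omega_of_C; auto.
  - intros w _. exists 3%nat. intros N HN. rewrite cs_trunc; auto.
    + unfold F2. simpl. ring.
    + intros n Hn. destruct n as [|[|[|[|n]]]]; try lia; reflexivity.
  - intros w Hw. exists (1 + w)%C. split.
    + intros eps He. exists eps. split. lra.
      intros h [Hh0 Hh].
      replace ((F2 (w + h) - F2 w) / h - (1 + w))%C with (Complex.RtoC (1/2) * h)%C.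
      2:{ unfold F2. rewrite !RtoC_div by lra. field. apply Cneq0; auto. }
      rewrite Cmod_mult, Cmod_RtoC_pos by lra. lra.
    + replace (w * (1 + w) - F2 w)%C with (Complex.RtoC (1/2) * w ^ 2)%C
        by (unfold F2; apply injective_projections; simpl; field).
      rewrite Cmod_mult, Cmod_RtoC_pos, Cmod_pow by lra. pose proof (Cmod_ge_0 w).
      assert (CMod w ^ 2 < 1) by (simpl; nra). lra. Qed.
Theorem theorem6p1 (k : nat) (hk : (1 <= k)%nat) (mu : Cx) :
  (forall (f : Cx -> Cx) (a : nat -> Cx), in_Omega f a ->
     Cmod (FS k a mu) <= FS_bound k mu) /\
  (exists (f : Cx -> Cx) (a : nat -> Cx), in_Omega f a /\
     Cmod (FS k a mu) = FS_bound k mu).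
Proof. split.
  - intros f a HO. exact (upper k hk mu f a HO).
  - assert (Hk : 0 < INR k) by (apply lt_0_INR; lia).
    set (t := tval k (toC mu)).
    destruct (Rle_or_lt (CMod t) 1) as [Ht|Ht].
    + exists (fun z => fromC (F1 (toC z))), (fun n => fromC (c1 n)). split. apply omega1.
      rewrite Cmod_toC, FS_toC, FS_alg by auto. rewrite FSb_toC. fold t.
      rewrite !toC_fromC. rewrite Rmax_left by auto. simpl c1.
      replace (Complex.RtoC (1 / 4) - t * (Complex.RtoC 0 * Complex.RtoC 0))%C with (Complex.RtoC (1/4))
        by (clearbody t; destruct t; apply injective_projections; simpl; ring).
      rewrite <- RtoC_mult, Cmod_RtoC_pos. field. lra.
      apply Rmult_le_pos; apply Rlt_le, Rdiv_lt_0_compat; lra.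
    + exists (fun z => fromC (F2 (toC z))), (fun n => fromC (c2 n)). split. apply omega2.
      rewrite Cmod_toC, FS_toC, FS_alg by auto. rewrite FSb_toC. fold t.
      rewrite !toC_fromC. rewrite Rmax_right by lra. simpl c2.
      replace (Complex.RtoC 0 - t * (Complex.RtoC (1 / 2) * Complex.RtoC (1 / 2)))%C with (- (Complex.RtoC (1/4) * t))%C
        by (clearbody t; destruct t; apply injective_projections; simpl; field).
      rewrite Cmod_mult, Cmod_opp, Cmod_mult, !Cmod_RtoC_pos. field. lra.
      lra. apply Rlt_le, Rdiv_lt_0_compat; lra. Qed.
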